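(* Let $G$ be a simple connected graph with at least two vertices, and let $f$ be a harmonic eigenfunction for $\lambda_1$ of $G$. Let $u,v$ be vertices with $f(u)\le f(z)\le f(v)$ for all $z\in V(G)$. Define \[ \mathrm{vol}_P=\sum_{z:\,f(z)\ge 0} d(z),\qquad \mathrm{vol}_N=\sum_{z:\,f(z)<0} d(z). \] Then \[ \lambda_1(G)\ge \frac{2}{\mathrm{dist}(u,v)\sqrt{\mathrm{vol}_P\cdot\mathrm{vol}_N}}. \]
   Context: For a connected simple graph $G$ with degree function $d$, the normalized Laplacian spectral gap is \[ \lambda_1=\inf_{f\neq 0,\ \sum_u f(u)d(u)=0}\frac{\sum_{u\sim v}(f(u)-f(v))^2}{\sum_v f(v)^2 d(v)}, \] where the numerator sums over edges. A harmonic eigenfunction for $\lambda_1$ is a nonzero function $f:V(G)\to\mathbb{R}$ with $\sum_u f(u)d(u)=0$ that attains this infimum. Here $\mathrm{dist}(u,v)$ is the graph distance. *)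

(* Defs.v *)
From HB Require Import structures.
From mathcomp Require Import all_boot all_order all_algebra.
Set Implicit Arguments. Unset Strict Implicit. Unset Printing Implicit Defensive.
Import Order.TTheory GRing.Theory Num.Theory.

Definition simple_graph (T : finType) (e : rel T) : Prop :=
  symmetric e /\ irreflexive e.

Definition graph_connected (T : finType) (e : rel T) : Prop :=
  forall x y : T, connect e x y.

Definition deg (T : finType) (e : rel T) (x : T) : nat := #|[set y | e x y]|.

Definition is_dist (T : finType) (e : rel T) (u v : T) (n : nat) : Prop :=
  (exists p : seq T, [&& path e u p, last u p == v & size p == n]) /\
  (forall p : seq T, path e u p -> last u p = v -> (n <= size p)%N).

Local Open Scope ring_scope.

(* sum over edges u ~ v of (f u - f v)^2; each unordered edge is counted once,
   hence the 1/2 in front of the sum over ordered adjacent pairs *)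
Definition edge_energy (R : realFieldType) (T : finType) (e : rel T) (f : T -> R) : R :=
  2^-1 * \sum_(x : T) \sum_(y : T | e x y) (f x - f y) ^+ 2.

Definition weighted_norm (R : realFieldType) (T : finType) (e : rel T) (f : T -> R) : R :=
  \sum_(x : T) f x ^+ 2 * (deg e x)%:R.

Definition rayleigh (R : realFieldType) (T : finType) (e : rel T) (f : T -> R) : R :=
  edge_energy e f / weighted_norm e f.

Definition admissible (R : realFieldType) (T : finType) (e : rel T) (f : T -> R) : Prop :=
  (exists x, f x != 0) /\ \sum_(x : T) f x * (deg e x)%:R = 0.

Definition is_lambda1 (R : realFieldType) (T : finType) (e : rel T) (l : R) : Prop :=
  (forall g : T -> R, admissible e g -> l <= rayleigh e g) /\
  (forall eps : R, 0 < eps -> exists g : T -> R, admissible e g /\ rayleigh e g < l + eps).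

Definition harmonic_eigenfunction (R : realFieldType) (T : finType) (e : rel T)
    (l : R) (f : T -> R) : Prop :=
  admissible e f /\ rayleigh e f = l.

Definition volP (R : realFieldType) (T : finType) (e : rel T) (f : T -> R) : R :=
  (\sum_(z : T | 0 <= f z) deg e z)%:R.

Definition volN (R : realFieldType) (T : finType) (e : rel T) (f : T -> R) : R :=
  (\sum_(z : T | f z < 0) deg e z)%:R.

(* Main.v *)
Require Import Defs.
From HB Require Import structures.
From mathcomp Require Import all_boot all_order all_algebra.
From mathcomp Require Import ring lra zify.
Import Order.TTheory GRing.Theory Num.Theory.
Set Implicit Arguments. Unset Strict Implicit. Unset Printing Implicit Defensive.
Local Open Scope ring_scope.

Lemma size_shorten (T : eqType) (x : T) (p : seq T) :
  (size (shorten x p) <= size p)%N.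
Proof.
elim: p x => [|y p IH] x //=.
case: ifP => _ /=; last by rewrite ltnS.
exact: leq_trans (IH x) (leqnSn _).
Qed.

Lemma cauchy_n (R : realFieldType) (n : nat) (a : 'I_n -> R) :
  (\sum_(i < n) a i) ^+ 2 <= n%:R * \sum_(i < n) a i ^+ 2.
Proof.
set S := \sum_(i < n) a i; set Q := \sum_(i < n) a i ^+ 2.
have H0 : 0 <= \sum_(i < n) \sum_(j < n) (a i - a j) ^+ 2.
  by apply: sumr_ge0 => i _; apply: sumr_ge0 => j _; exact: sqr_ge0.
have E : \sum_(i < n) \sum_(j < n) (a i - a j) ^+ 2 =
         \sum_(i < n) (n%:R * a i ^+ 2 + Q - 2 * (a i * S)).
  apply: eq_bigr => i _.
  rewrite (eq_bigr (fun j => (a i ^+ 2 + a j ^+ 2) - 2 * (a i * a j))); last first.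
    by move=> j _; ring.
  rewrite sumrB big_split /= sumr_const card_ord -/Q -mulr_sumr -mulr_sumr -/S.
  by rewrite [n%:R * _]mulr_natl.
have E2 : \sum_(i < n) \sum_(j < n) (a i - a j) ^+ 2 = 2 * (n%:R * Q - S ^+ 2).
  rewrite E sumrB big_split /= sumr_const card_ord -mulr_sumr -mulr_sumr -mulr_suml -/S -/Q.
  rewrite -mulr_natl; ring.
rewrite E2 in H0. nra.
Qed.

Lemma sum_sub_le (R : numDomainType) (I : finType) (A : {set I}) (P : pred I)
  (g : I -> R) : (forall i, 0 <= g i) -> (forall i, i \in A -> P i) ->
  \sum_(i in A) g i <= \sum_(i | P i) g i.
Proof.
move=> g0 AP.
rewrite [X in _ <= X](bigID (fun i => i \in A)) /=.
rewrite -[X in X <= _]addr0; apply: lerD.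
  rewrite le_eqVlt; apply/orP; left; apply/eqP; apply: eq_bigl => i /=.
  by case: (boolP (i \in A)) => iA; rewrite ?andbF ?andbT ?AP.
by apply: sumr_ge0.
Qed.

Lemma path_bound (R : realFieldType) (T : finType) (e : rel T) (f : T -> R)
  (u v : T) (n : nat) :
  symmetric e -> is_dist e u v n -> (f v - f u) ^+ 2 <= n%:R * edge_energy e f.
Proof.
move=> esym [[p /and3P[pp /eqP lp /eqP sp]] Hmin].
have hs := size_shorten u p.
move: hs lp; case: (shortenP pp) => q pq uq _ hs lq.
have sq : size q = n by apply/eqP; rewrite eqn_leq (Hmin q pq lq) -sp hs.
pose x i := nth u (u :: q) i.
have xn : x n = v by rewrite /x -sq -lq -[size q]/((size (u :: q)).-1) nth_last.
have x0 : x 0%N = u by [].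
have xe : forall i, (i < n)%N -> e (x i) (x i.+1).
  by move=> i lt; move/(pathP u): pq => /(_ i); rewrite sq => /(_ lt).
have xinj : forall i j, (i <= n)%N -> (j <= n)%N -> x i = x j -> i = j.
  move=> i j hi hj /eqP; rewrite /x nth_uniq //= ?sq ?ltnS //.
  by move/eqP.
pose a (i : 'I_n) := f (x i.+1) - f (x i).
have tele : \sum_(i < n) a i = f v - f u.
  rewrite -(big_mkord xpredT (fun i => f (x i.+1) - f (x i))) telescope_sumr //.
  by rewrite xn x0.
suff H : \sum_(i < n) a i ^+ 2 <= edge_energy e f.
  have := cauchy_n a; rewrite tele => C; apply: (le_trans C).
  by rewrite ler_wpM2l // ler0n.
pose g (z : T * T) := (f z.1 - f z.2) ^+ 2.
pose h' (i : 'I_n) (b : bool) := if b then (x i, x i.+1) else (x i.+1, x i).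
pose h (k : 'I_n * bool) := h' k.1 k.2.
have hinj : {in [set: 'I_n * bool] &, injective h}.
  have ltn' (i : 'I_n) : (i <= n)%N by apply: ltnW.
  move=> [i b] [j c] _ _; rewrite /h /h' /=.
  case: b; case: c => -[] E1 E2.
  - by have /val_inj -> := xinj _ _ (ltn' i) (ltn' j) E1.
  - have := xinj _ _ (ltn' i) (ltn_ord j) E1.
    have := xinj _ _ (ltn_ord i) (ltn' j) E2. lia.
  - have := xinj _ _ (ltn_ord i) (ltn' j) E1.
    have := xinj _ _ (ltn' i) (ltn_ord j) E2. lia.
  - by have /val_inj -> := xinj _ _ (ltn' i) (ltn' j) E2.
have E1 : \sum_(k in [set: 'I_n * bool]) g (h k) = 2 * \sum_(i < n) a i ^+ 2.
  rewrite (eq_bigl xpredT); last by move=> k; rewrite in_setT.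
  rewrite -(pair_big xpredT xpredT (fun i b => g (h' i b))) /=.
  rewrite mulr_sumr; apply: eq_bigr => i _.
  rewrite big_bool /g /h' /a /=; ring.
have E2 : \sum_(k in [set: 'I_n * bool]) g (h k) <=
          \sum_(z | true && e z.1 z.2) g z.
  rewrite -big_imset //; apply: sum_sub_le; first by move=> z; apply: sqr_ge0.
  move=> z /imsetP [[i b] _ ->]; rewrite /h /h' /=.
  by case: b => /=; [apply: xe | rewrite esym; apply: xe].
rewrite /edge_energy (pair_big_dep xpredT (fun x y => e x y) (fun x y => g (x, y))) /=.
have -> : \sum_(z | e z.1 z.2) g (z.1, z.2) = \sum_(z | e z.1 z.2) g z.
  by apply: eq_bigr => -[].
move: E2; rewrite E1 /=.
move: (\sum_(i < n) a i ^+ 2) (\sum_(z | e z.1 z.2) g z) => A B HAB.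
lra.
Qed.

Lemma sub_ge0' (R : numDomainType) (x y : R) : x <= y -> 0 <= y - x.
Proof. by rewrite subr_ge0. Qed.

Lemma split_sign (R : realDomainType) (T : finType) (f F : T -> R) :
  \sum_z F z = \sum_(z | 0 <= f z) F z + \sum_(z | f z < 0) F z.
Proof.
rewrite (bigID (fun z => 0 <= f z)) /=; congr (_ + _).
by apply: eq_bigl => z; rewrite ltNge.
Qed.

Unset Implicit Arguments.
Set Strict Implicit.

Theorem lemma2p2 (R : rcfType) (T : finType) (e : rel T)
    (Hsimple : simple_graph e) (Hconn : graph_connected e) (Hcard : (1 < #|T|)%N)
    (l : R) (Hl : is_lambda1 e l) (f : T -> R) (Hf : harmonic_eigenfunction e l f)
    (u v : T) (Hu : forall z, f u <= f z) (Hv : forall z, f z <= f v)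
    (n : nat) (Hn : is_dist e u v n) :
  2 / (n%:R * Num.sqrt (volP e f * volN e f)) <= l.
Proof.
case: Hsimple => Hsym Hirr.
case: Hf => [[[x0 fx0] Hsum0] Hrl].
have Hpath := path_bound f Hsym Hn.
set E := edge_energy e f in Hpath.
set N := weighted_norm e f.
have lE : l = E / N by rewrite -Hrl.
have E0 : 0 <= E.
  rewrite /E /edge_energy mulr_ge0 ?invr_ge0 ?ler0n //.
  by apply: sumr_ge0 => x _; apply: sumr_ge0 => y _; apply: sqr_ge0.
have d0 : forall z, 0 <= (deg e z)%:R :> R by move=> z; apply: ler0n.
have degx : (0 < deg e x0)%N.
  have [a [b [_ _ ab]]] := card_gt1P Hcard.
  pose y := if a == x0 then b else a.
  have yx : y != x0.
    rewrite /y; case: ifP => [/eqP ax | /negbT //].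
    by rewrite -ax eq_sym.
  move: (Hconn x0 y) => /connectP [[| z p] /= pp ly].
    by move: yx; rewrite ly eqxx.
  move/andP: pp => [exz _].
  by apply/card_gt0P; exists z; rewrite inE.
have N0 : 0 < N.
  rewrite /N /weighted_norm (bigD1 x0) //=.
  have h1 : 0 < f x0 ^+ 2 * (deg e x0)%:R.
    apply: mulr_gt0; last by rewrite ltr0n.
    by rewrite lt_def sqrf_eq0 fx0 sqr_ge0.
  have h2 : 0 <= \sum_(i | i != x0) f i ^+ 2 * (deg e i)%:R.
    by apply: sumr_ge0 => i _; apply: mulr_ge0 => //; apply: sqr_ge0.
  lra.
have l0 : 0 <= l by rewrite lE divr_ge0 // ltW.
set s := Num.sqrt _.
have s0 : 0 <= s by apply: sqrtr_ge0.
have [ns0 | ns0] := eqVneq (n%:R * s) 0.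
  by rewrite ns0 invr0 mulr0.
have nspos : 0 < n%:R * s by rewrite lt_def ns0 mulr_ge0 // ler0n.
rewrite lE ler_pdivlMr // mulrAC ler_pdivrMr //.
set d := fun z => (deg e z)%:R : R.
set SP := \sum_(z | 0 <= f z) f z * d z.
set SN := \sum_(z | f z < 0) f z * d z.
have Hs : SP + SN = 0 by rewrite -Hsum0 (split_sign f).
set vP := volP e f; set vN := volN e f.
have vPE : vP = \sum_(z | 0 <= f z) d z by rewrite /vP /volP natr_sum.
have vNE : vN = \sum_(z | f z < 0) d z by rewrite /vN /volN natr_sum.
have vP0 : 0 <= vP by apply: ler0n.
have vN0 : 0 <= vN by apply: ler0n.
have NE : N = \sum_(z | 0 <= f z) f z ^+ 2 * d z + \sum_(z | f z < 0) f z ^+ 2 * d z.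
  by rewrite /N /weighted_norm (split_sign f).
have NPb : \sum_(z | 0 <= f z) f z ^+ 2 * d z <= f v * SP.
  rewrite /SP mulr_sumr; apply: ler_sum => z hz.
  have := Hv z; have := d0 z; rewrite -/(d z) => h1 h2.
  have := mulr_ge0 (mulr_ge0 hz h1) (sub_ge0' h2); nra.
have NNb : \sum_(z | f z < 0) f z ^+ 2 * d z <= f u * SN.
  rewrite /SN mulr_sumr; apply: ler_sum => z hz.
  have := Hu z; have := d0 z; rewrite -/(d z) => h1 h2.
  have hz' : 0 <= - f z by rewrite oppr_ge0 ltW.
  have := mulr_ge0 (mulr_ge0 hz' h1) (sub_ge0' h2); nra.
have SPb : SP <= f v * vP.
  rewrite vPE /SP mulr_sumr; apply: ler_sum => z hz.
  have := Hv z; have := d0 z; rewrite -/(d z) => h1 h2; nra.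
have SNb : f u * vN <= SN.
  rewrite vNE /SN mulr_sumr; apply: ler_sum => z hz.
  have := Hu z; have := d0 z; rewrite -/(d z) => h1 h2; nra.
have SP0 : 0 <= SP.
  by apply: sumr_ge0 => z hz; apply: mulr_ge0 => //; apply: d0.
have s2 : s ^+ 2 = vP * vN by rewrite sqr_sqrtr // mulr_ge0.
have uv := Hv u.
have K1 : SP * SP <= (f v * vP) * (- f u * vN) by nra.
have K2 : 4 * ((f v * vP) * (- f u * vN)) <= (f v - f u) ^+ 2 * (vP * vN).
  have := mulr_ge0 (sqr_ge0 (f v + f u)) (mulr_ge0 vP0 vN0); nra.
have K3 : (2 * SP) ^+ 2 <= ((f v - f u) * s) ^+ 2.
  rewrite !exprMn s2; nra.
have K4 : 2 * SP <= (f v - f u) * s.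
  have := mulr_ge0 (sub_ge0' uv) s0; nra.
have K5 : N <= (f v - f u) * SP by nra.
have K6 := ler_wpM2l (sub_ge0' uv) K4.
have K7 := ler_wpM2r s0 Hpath.
nra.
Qed.
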